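(* Let $k\geq 2$ and $i\in[k-1]$ be integers. Let $G$ be a graph which does not contain the configuration $(\dagger^{(1)})^k_2$, and let $f=u_1\dots u_{k-1}$ be a copy of $K_{k-1}$ in $G$ which is a copy of $K_{k-1}$ of two distinct $K_{k+1}$-components $C_1$ and $C_2$. Let $uv$ be an edge of $G$ such that $fu,fv\in C_1$, and let $w$ be a vertex of $G$ such that $fw\in C_2$. Then (i) $\Gamma(u_1,\dots,u_{i-1},u_{i+1},\dots,u_{k-1},w,u,v)$ is an independent set; (ii) $\Gamma(x_1,\dots,x_{i-1},u_{i+1},\dots,u_{k-1},w,u,v)$ is an independent set for any copy $x_1\dots x_{i-1}$ of $K_{i-1}$ in $G$ such that $x_j\in\Gamma(u_{j+1},\dots,u_{k-1},w,u,v)$ for each $j<i$.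
   Context: A $K_{k+1}$-walk in $G$ is a sequence of copies of $K_k$ in which consecutive copies lie in a common copy of $K_{k+1}$; the endpoints are then $K_{k+1}$-connected, and the equivalence classes of copies of $K_k$ are the $K_{k+1}$-components. A copy of $K_{k-1}$ is a copy of $K_{k-1}$ of a component $C$ if it extends to a copy of $K_k$ in $C$. For a clique $f$ and a vertex $x$ adjacent to all of $f$, $fx$ is the clique $f\cup\{x\}$, and $fx\in C$ means this copy of $K_k$ lies in $C$. $\Gamma(x_1,\dots,x_s)$ is the common neighbourhood. $G$ contains the configuration $(\dagger^{(1)})^k_2$ if there are (not necessarily distinct) vertices $u_1,\dots,u_k,v_2,w_{21}$ such that $u_1\dots u_k$ is a copy of $K_k$ in some $K_{k+1}$-component $C$, while $u_1v_2u_3\dots u_k$ and $u_2w_{21}u_3\dots u_k$ are copies of $K_k$ in $G$ not in $C$. *)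

(* Defs.v *)
(* Finite simple graphs given by a symmetric irreflexive
   relation on a finType; cliques are represented as finite vertex sets. *)
From Stdlib Require Import Relations.
From mathcomp Require Import all_boot.
Set Implicit Arguments. Unset Strict Implicit. Unset Printing Implicit Defensive.

Section Graphs.
Variable T : finType.
Variable e : rel T.

Definition simple_graph : Prop := (forall x y, e x y = e y x) /\ (forall x, ~~ e x x).

Definition clique (A : {set T}) : bool :=
  [forall x in A, forall y in A, (x != y) ==> e x y].

Definition Kcopy (k : nat) (A : {set T}) : bool := clique A && (#|A| == k).

Definition kstep (k : nat) (A B : {set T}) : Prop :=
  Kcopy k A /\ Kcopy k B /\ exists D : {set T}, Kcopy k.+1 D /\ A \subset D /\ B \subset D.

Definition kconn (k : nat) (A B : {set T}) : Prop :=
  Kcopy k A /\ clos_refl_trans _ (kstep k) A B.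

Definition kcomponent (k : nat) (C : {set {set T}}) : Prop :=
  exists A0, Kcopy k A0 /\ forall B, B \in C <-> kconn k A0 B.

Definition ext (f : {set T}) (x : T) : {set T} := x |: f.

Definition Kminus_of (k : nat) (C : {set {set T}}) (f : {set T}) : Prop :=
  Kcopy k.-1 f /\ exists x, [forall y in f, e y x] && (ext f x \in C).

Definition Gamma (S : {set T}) : {set T} := [set y | [forall x in S, e x y]].

Definition independent (A : {set T}) : Prop :=
  forall x y, x \in A -> y \in A -> ~~ e x y.

Definition seqset (s : nat -> T) (a b : nat) : {set T} :=
  \bigcup_(a <= j < b.+1) [set s j].

Definition dagger1_k2 (k : nat) : Prop :=
  exists (u : nat -> T) (v2 w21 : T) (C : {set {set T}}),
    [/\ kcomponent k C,
        Kcopy k (seqset u 1 k) /\ seqset u 1 k \in C,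
        Kcopy k (u 1 |: (v2 |: seqset u 3 k)) /\ (u 1 |: (v2 |: seqset u 3 k)) \notin C &
        Kcopy k (u 2 |: (w21 |: seqset u 3 k)) /\ (u 2 |: (w21 |: seqset u 3 k)) \notin C].

End Graphs.

(* Main.v *)
Require Import Defs.
From mathcomp Require Import all_boot.
From Stdlib Require Import Relations.
From mathcomp Require Import all_boot zify.
Set Implicit Arguments. Unset Strict Implicit. Unset Printing Implicit Defensive.

Section Seqset.
Variable T : finType.

Lemma seqsetE (s : nat -> T) a b : seqset s a b = [set:: map s (index_iota a b.+1)].
Proof.
rewrite /seqset; elim: (index_iota a b.+1) => [|j l IH].
  by rewrite big_nil; apply/setP => x; rewrite !inE.
by rewrite big_cons IH set_cons.
Qed.

Lemma seqsetP (s : nat -> T) a b y :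
  reflect (exists2 m, a <= m <= b & y = s m) (y \in seqset s a b).
Proof.
rewrite seqsetE inE; apply: (iffP mapP).
  by move=> [m]; rewrite mem_index_iota ltnS => Hm ->; exists m.
by move=> [m Hm ->]; exists m; rewrite // mem_index_iota ltnS.
Qed.

Lemma seqset_inj (s : nat -> T) a b : #|seqset s a b| = b.+1 - a ->
  forall p q, a <= p <= b -> a <= q <= b -> s p = s q -> p = q.
Proof.
rewrite seqsetE cardsE /index_iota => Hc.
have Hs : size (map s (iota a (b.+1 - a))) = b.+1 - a by rewrite size_map size_iota.
have U : uniq (map s (iota a (b.+1 - a))) by apply/card_uniqP; rewrite Hc Hs.
move=> p q Hp Hq E.
have Hp' : p - a < b.+1 - a by lia.
have Hq' : q - a < b.+1 - a by lia.
rewrite -{1}Hs in Hp'. rewrite -{1}Hs in Hq'.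
have := nth_uniq (s 0) Hp' Hq' U.
rewrite Hs in Hp' Hq'.
rewrite !(nth_map 0) ?size_iota // !nth_iota // subnKC; last lia.
rewrite subnKC; last lia.
by rewrite E eqxx => /esym/eqP; lia.
Qed.

End Seqset.

Section Misc.
Variable T : finType.

Lemma seqset_card (s : nat -> T) a b : #|seqset s a b| <= b.+1 - a.
Proof.
by rewrite seqsetE cardsE; apply: leq_trans (card_size _) _; rewrite size_map size_iota.
Qed.

Lemma seqset_recr (s : nat -> T) a b : a <= b.+1 -> seqset s a b.+1 = s b.+1 |: seqset s a b.
Proof.
move=> hab; apply/setP => y; rewrite !inE; apply/seqsetP/orP.
- move=> [m Hm ->]; case: (ltnP m b.+1) => Hmb.
    by right; apply/seqsetP; exists m => //; lia.
  by left; have -> : m = b.+1 by lia.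
- case=> [/eqP -> | /seqsetP [m Hm ->]]; first by exists b.+1 => //; lia.
  by exists m => //; lia.
Qed.

Lemma seqset0 (s : nat -> T) a b : b < a -> seqset s a b = set0.
Proof.
move=> hab; apply/setP => y; rewrite !inE; apply/seqsetP => [[m Hm _]]; lia.
Qed.

Lemma seqset_split (s : nat -> T) a m b : a <= m <= b.+1 ->
  seqset s a b = seqset s a m.-1 :|: seqset s m b.
Proof.
move=> H; apply/setP => y; rewrite inE; apply/seqsetP/orP.
- move=> [p Hp ->]; case: (ltnP p m) => Hpm.
    by left; apply/seqsetP; exists p => //; lia.
  by right; apply/seqsetP; exists p => //; lia.
- by case=> /seqsetP [p Hp ->]; exists p => //; lia.
Qed.

End Misc.

Ltac btauto := repeat (match goal with
  | |- context [?y == ?z] => case: (y == z)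
  | |- context [?y \in ?S] => case: (y \in S) end); by [].
Ltac subs := apply/subsetP => ?; rewrite !inE; btauto.


Section Graph.
Variable T : finType.
Variable e : rel T.
Hypothesis esym : forall x y, e x y = e y x.
Hypothesis eirr : forall x, ~~ e x x.

Lemma adj_notin (A : {set T}) x : (forall y, y \in A -> e y x) -> x \notin A.
Proof. by move=> H; apply/negP => /H; rewrite (negbTE (eirr x)). Qed.

Lemma cliqueP (A : {set T}) :
  reflect (forall x y, x \in A -> y \in A -> x != y -> e x y) (clique e A).
Proof.
apply: (iffP forallP) => [H x y xA yA nxy | H x].
  by move: (H x); rewrite xA /= => /forallP /(_ y); rewrite yA nxy.
by apply/implyP => xA; apply/forallP => y; apply/implyP => yA; apply/implyP; apply: H.
Qed.

Lemma clique_sub (A B : {set T}) : A \subset B -> clique e B -> clique e A.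
Proof.
move=> /subsetP sAB /cliqueP H; apply/cliqueP => x y xA yA; apply: H; exact: sAB.
Qed.

Lemma clique_add (A : {set T}) x : clique e A -> (forall y, y \in A -> e y x) ->
  clique e (x |: A).
Proof.
move=> /cliqueP H Hx; apply/cliqueP => a b; rewrite !inE.
case/orP => [/eqP -> | aA]; case/orP => [/eqP -> | bA] //; first by rewrite eqxx.
- by move=> _; rewrite esym; apply: Hx.
- by move=> _; apply: Hx.
- exact: H.
Qed.

Lemma Kcopy_add n (A : {set T}) x : Kcopy e n A -> (forall y, y \in A -> e y x) ->
  Kcopy e n.+1 (x |: A).
Proof.
move=> /andP [cA /eqP cardA] Hx; apply/andP; split; first exact: clique_add.
by rewrite cardsU1 (adj_notin Hx) cardA.
Qed.

Lemma Kcopy_del n (A : {set T}) a : Kcopy e n.+1 A -> a \in A -> Kcopy e n (A :\ a).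
Proof.
move=> /andP [cA /eqP cardA] aA; apply/andP; split.
  by apply: clique_sub cA; apply: subsetDl.
by move: (cardsD1 a A); rewrite aA cardA add1n => [[->]].
Qed.

Lemma Kcopy_sub n m (A B : {set T}) : A \subset B -> #|A| = n -> Kcopy e m B -> Kcopy e n A.
Proof.
move=> sAB cA /andP [cB _]; apply/andP; split; first exact: clique_sub cB.
by rewrite cA.
Qed.

Lemma kstep_sym k A B : kstep e k A B -> kstep e k B A.
Proof. by move=> [hA [hB [D [hD [sA sB]]]]]; split=> //; split=> //; exists D. Qed.

Lemma rt_sym k A B : clos_refl_trans _ (kstep e k) A B -> clos_refl_trans _ (kstep e k) B A.
Proof.
elim=> [x y /kstep_sym H | x | x y z _ H1 _ H2].
- exact: rt_step.
- exact: rt_refl.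
- exact: rt_trans H2 H1.
Qed.

Lemma comp_step k C A B : kcomponent e k C -> A \in C -> kstep e k A B -> B \in C.
Proof.
move=> [A0 [hA0 HC]] /HC [_ H] St; apply/HC; split=> //.
exact: rt_trans H (rt_step _ _ _ _ St).
Qed.

Lemma comp_D k C A B D : kcomponent e k C -> A \in C -> Kcopy e k A -> Kcopy e k B ->
  Kcopy e k.+1 D -> A \subset D -> B \subset D -> B \in C.
Proof.
move=> HC HA kA kB kD sA sB; apply: comp_step HC HA _.
by split=> //; split=> //; exists D.
Qed.

Lemma comp_disj k C1 C2 A : kcomponent e k C1 -> kcomponent e k C2 -> C1 != C2 ->
  A \in C1 -> A \in C2 -> False.
Proof.
move=> [A1 [h1 H1]] [A2 [h2 H2]] /eqP N /H1 [_ r1] /H2 [_ r2]; apply: N.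
have r12 : clos_refl_trans _ (kstep e k) A1 A2 by apply: rt_trans r1 (rt_sym r2).
apply/setP => B; apply/idP/idP.
- move=> /H1 [_ r]; apply/H2; split=> //; exact: rt_trans (rt_sym r12) r.
- move=> /H2 [_ r]; apply/H1; split=> //; exact: rt_trans r12 r.
Qed.

Variable n : nat.
Variables (u v w : T) (C1 C2 : {set {set T}}).
Hypothesis euv : e u v.
Hypothesis HC1 : kcomponent e n.+2 C1.
Hypothesis HC2 : kcomponent e n.+2 C2.
Hypothesis C12 : C1 != C2.
Hypothesis ND : ~ dagger1_k2 e n.+2.

Lemma adjU1 (A : {set T}) a z : e a z -> (forall y, y \in A -> e y z) ->
  forall y, y \in a |: A -> e y z.
Proof. by move=> h H y; rewrite !inE => /orP [/eqP -> | /H]. Qed.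

Lemma adjD1 (A : {set T}) a z : (forall y, y \in A -> e y z) ->
  forall y, y \in A :\ a -> e y z.
Proof. by move=> H y; rewrite !inE => /andP [_ /H]. Qed.

Lemma nodag (R : {set T}) a b : #|R| = n ->
  Kcopy e n.+2 (a |: (w |: R)) -> a |: (w |: R) \in C2 ->
  Kcopy e n.+2 (a |: (u |: R)) -> a |: (u |: R) \notin C2 ->
  Kcopy e n.+2 (w |: (b |: R)) -> w |: (b |: R) \in C2.
Proof.
move=> cR K1 I1 K2 I2 K3; apply/negPn/negP => I3; apply: ND.
pose us m := if m == 1 then a else if m == 2 then w else nth a (enum R) (m - 3).
have E3 : seqset us 3 n.+2 = R.
  apply/setP => y; apply/seqsetP/idP.
  - move=> [m Hm ->]; rewrite /us.
    have -> : (m == 1) = false by apply/eqP; lia.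
    have -> : (m == 2) = false by apply/eqP; lia.
    rewrite -mem_enum; apply: mem_nth; rewrite -cardE cR; lia.
  - move=> yR; exists ((index y (enum R)) + 3).
      have : index y (enum R) < size (enum R) by rewrite index_mem mem_enum.
      rewrite -cardE cR; lia.
    rewrite /us; have -> : (index y (enum R) + 3 == 1) = false by apply/eqP; lia.
    have -> : (index y (enum R) + 3 == 2) = false by apply/eqP; lia.
    by rewrite addnK nth_index // mem_enum.
have E1 : seqset us 1 n.+2 = a |: (w |: R).
  apply/setP => y; rewrite !inE; apply/seqsetP/idP.
  - move=> [m Hm ->]; rewrite /us.
    have [_|h1] := eqVneq m 1; first by rewrite eqxx.
    have [_|h2] := eqVneq m 2; first by rewrite eqxx orbT.
    have : us m \in seqset us 3 n.+2 by apply/seqsetP; exists m => //; lia.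
    by rewrite E3 /us (negbTE h1) (negbTE h2) => ->; rewrite !orbT.
  - case/orP => [/eqP -> | /orP [/eqP -> | ]]; first by exists 1.
      by exists 2.
    rewrite -E3 => /seqsetP [m Hm ->]; exists m => //; lia.
exists us, u, b, C2; split => //.
- by rewrite E1.
- by rewrite E3.
- by rewrite E3.
Qed.

Definition Pinv (S : {set T}) := [/\ Kcopy e n.+1 S,
  forall y, y \in S -> [&& e y u, e y v & e y w], u |: S \in C1 & w |: S \in C2].

Lemma uneqv : u != v.
Proof. by apply/eqP => E; move: euv; rewrite E (negbTE (eirr v)). Qed.

Lemma Pinv_step S a b : Pinv S -> a \in S -> (forall y, y \in S :\ a -> e y b) ->
  e b u -> e b v -> e b w -> Pinv (b |: (S :\ a)).
Proof.
move=> [KS AS IS1 IS2] aS Hb bu bv bw.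
have Au : forall y, y \in S -> e y u by move=> y /AS /and3P [].
have Av : forall y, y \in S -> e y v by move=> y /AS /and3P [].
have Aw : forall y, y \in S -> e y w by move=> y /AS /and3P [].
set R := S :\ a.
have AuR := adjD1 (a:=a) Au. have AvR := adjD1 (a:=a) Av. have AwR := adjD1 (a:=a) Aw.
have KR : Kcopy e n R by apply: Kcopy_del.
have cR : #|R| = n by case/andP: KR => _ /eqP.
have ES : a |: R = S by rewrite setD1K.
have ub : e u b by rewrite esym.
have vb : e v b by rewrite esym.
split.
- exact: Kcopy_add.
- move=> y; rewrite !inE => /orP [/eqP -> | /andP [_ yS]]; first by rewrite bu bv bw.
  exact: AS.
- have K1 := Kcopy_add KS Au.
  have D1 := Kcopy_add K1 (adjU1 euv Av).
  have K2 := Kcopy_add (Kcopy_add KR AuR) (adjU1 euv AvR).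
  have I2 : v |: (u |: R) \in C1.
    by apply: (comp_D HC1 IS1 K1 K2 D1); [subs | rewrite -ES; subs].
  have D2 := Kcopy_add K2 (adjU1 vb (adjU1 ub Hb)).
  have K3 := Kcopy_add (Kcopy_add KR Hb) (adjU1 bu AuR).
  by apply: (comp_D HC1 I2 K2 K3 D2); subs.
- have Kw : Kcopy e n.+2 (a |: (w |: R)).
    by rewrite setUCA ES; apply: Kcopy_add.
  have Ku : Kcopy e n.+2 (a |: (u |: R)).
    by rewrite setUCA ES; apply: Kcopy_add.
  apply: (nodag cR Kw) => //.
  - by rewrite setUCA ES.
  - by rewrite setUCA ES; apply/negP => /(comp_disj HC1 HC2 C12 IS1).
  - exact: (Kcopy_add (Kcopy_add KR Hb) (adjU1 bw AwR)).
Qed.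

Lemma Pinv_final S a y z : Pinv S -> a \in S ->
  (forall t, t \in S :\ a -> e t y) -> (forall t, t \in S :\ a -> e t z) ->
  e y u -> e y v -> e y w -> e z u -> e z v -> e z w -> e y z -> False.
Proof.
move=> [KS AS IS1 IS2] aS Hy Hz yu yv yw zu zv zw yz.
have Au : forall y, y \in S -> e y u by move=> t /AS /and3P [].
have Av : forall y, y \in S -> e y v by move=> t /AS /and3P [].
have Aw : forall y, y \in S -> e y w by move=> t /AS /and3P [].
set R := S :\ a.
have AuR := adjD1 (a:=a) Au. have AvR := adjD1 (a:=a) Av. have AwR := adjD1 (a:=a) Aw.
have KR : Kcopy e n R by apply: Kcopy_del.
have cR : #|R| = n by case/andP: KR => _ /eqP.
have ES : a |: R = S by rewrite setD1K.
have uy : e u y by rewrite esym.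
have vy : e v y by rewrite esym.
have uz : e u z by rewrite esym.
have K1 := Kcopy_add KS Au.
have D1 := Kcopy_add K1 (adjU1 euv Av).
have K2 := Kcopy_add (Kcopy_add KR AuR) (adjU1 euv AvR).
have I2 : v |: (u |: R) \in C1.
  by apply: (comp_D HC1 IS1 K1 K2 D1); [subs | rewrite -ES; subs].
have D2 := Kcopy_add K2 (adjU1 vy (adjU1 uy Hy)).
have K3 := Kcopy_add (Kcopy_add KR AuR) (adjU1 uy Hy).
have I3 : y |: (u |: R) \in C1 by apply: (comp_D HC1 I2 K2 K3 D2); subs.
have D3 := Kcopy_add K3 (adjU1 yz (adjU1 uz Hz)).
have K4 := Kcopy_add (Kcopy_add KR Hy) (adjU1 yz Hz).
have I4 : z |: (y |: R) \in C1 by apply: (comp_D HC1 I3 K3 K4 D3); subs.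
have D4 := Kcopy_add K4 (adjU1 zw (adjU1 yw AwR)).
have K5 := Kcopy_add (Kcopy_add KR Hy) (adjU1 yw AwR).
have I5 : w |: (y |: R) \in C1 by apply: (comp_D HC1 I4 K4 K5 D4); subs.
have Kw : Kcopy e n.+2 (a |: (w |: R)).
  by rewrite setUCA ES; apply: Kcopy_add.
have Ku : Kcopy e n.+2 (a |: (u |: R)).
  by rewrite setUCA ES; apply: Kcopy_add.
have I6 : w |: (y |: R) \in C2.
  apply: (nodag cR Kw) => //.
  - by rewrite setUCA ES.
  - by rewrite setUCA ES; apply/negP => /(comp_disj HC1 HC2 C12 IS1).
exact: comp_disj HC1 HC2 C12 I5 I6.
Qed.


Lemma GammaP (A : {set T}) t : reflect (forall s, s \in A -> e s t) (t \in Gamma e A).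
Proof.
rewrite inE; apply: (iffP forallP) => [H s sA | H s].
  by move: (H s); rewrite sA.
by apply/implyP => /H.
Qed.

Lemma main_ii uu i x : 1 <= i <= n.+1 -> Kcopy e n.+1 (seqset uu 1 n.+1) ->
  Pinv (seqset uu 1 n.+1) -> Kcopy e i.-1 (seqset x 1 i.-1) ->
  (forall j, 1 <= j < i -> x j \in Gamma e (seqset uu j.+1 n.+1 :|: [set w; u; v])) ->
  independent e (Gamma e (seqset x 1 i.-1 :|: seqset uu i.+1 n.+1 :|: [set w; u; v])).
Proof.
case: i => [//|i] /= hi Kf P0 Kx Hx.
have injU : forall p q, 1 <= p <= n.+1 -> 1 <= q <= n.+1 -> uu p = uu q -> p = q.
  by apply: seqset_inj; case/andP: (Kf) => _ /eqP ->; lia.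
have injX : forall p q, 1 <= p <= i -> 1 <= q <= i -> x p = x q -> p = q.
  by apply: seqset_inj; case/andP: Kx => _ /eqP ->; lia.
have Hx' : forall j, 1 <= j <= i ->
   [/\ forall m, j < m <= n.+1 -> e (uu m) (x j), e w (x j), e u (x j) & e v (x j)].
  move=> j hj; have /GammaP G := Hx j hj.
  split; try by apply: G; rewrite !inE eqxx ?orbT.
  by move=> m hm; apply: G; rewrite inE; apply/orP; left; apply/seqsetP; exists m => //; lia.
pose Sj j := seqset x 1 j :|: seqset uu j.+1 n.+1.
have EqD : forall j, j <= i -> Sj j :\ uu j.+1 = seqset x 1 j :|: seqset uu j.+2 n.+1.
  move=> j hj; apply/setP => y; rewrite !inE; apply/idP/idP.
  - case/andP => ne /orP [/seqsetP [m Hm ->] | /seqsetP [m Hm Ey]].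
      by apply/orP; left; apply/seqsetP; exists m.
    apply/orP; right; apply/seqsetP; exists m => //.
    case: (ltnP j.+1 m) => hm; first lia.
    have Em : m = j.+1 by lia.
    by move: ne; rewrite Ey Em eqxx.
  - case/orP => /seqsetP [m Hm ->].
      have [+ _ _ _] := Hx' m ltac:(lia).
      move=> /(_ j.+1 ltac:(lia)) E.
      apply/andP; split.
        by apply/negP => /eqP Ex; move: E; rewrite Ex (negbTE (eirr _)).
      by apply/orP; left; apply/seqsetP; exists m.
    apply/andP; split.
      by apply/negP => /eqP /injU Em; have := Em ltac:(lia) ltac:(lia); lia.
    by apply/orP; right; apply/seqsetP; exists m => //; lia.
have Pj : forall j, j <= i -> Pinv (Sj j).
  elim=> [_ | j IH hj].
    by rewrite /Sj seqset0 // set0U.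
  have P1 := IH ltac:(lia).
  have Sj1 : Sj j.+1 = x j.+1 |: (Sj j :\ uu j.+1).
    by rewrite EqD; last lia; rewrite /Sj seqset_recr // setUA.
  have [Hu1 Hw1 Hu2 Hv2] := Hx' j.+1 ltac:(lia).
  rewrite Sj1; apply: (Pinv_step P1).
  - by rewrite inE; apply/orP; right; apply/seqsetP; exists j.+1 => //; lia.
  - move=> y; rewrite EqD; last lia.
    rewrite inE => /orP [/seqsetP [m Hm ->] | /seqsetP [m Hm ->]].
      case/andP: Kx => /cliqueP C _; apply: C.
      + by apply/seqsetP; exists m => //; lia.
      + by apply/seqsetP; exists j.+1 => //; lia.
      + by apply/negP => /eqP /injX E; have := E ltac:(lia) ltac:(lia); lia.
    by apply: Hu1; lia.
  - by rewrite esym.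
  - by rewrite esym.
  - by rewrite esym.
have PS := Pj i (leqnn i).
move=> y z /GammaP Hy /GammaP Hz; apply/negP => yz.
have EqS := EqD i (leqnn i).
apply: (Pinv_final PS (a := uu i.+1) (y := y) (z := z)) => //.
- by rewrite inE; apply/orP; right; apply/seqsetP; exists i.+1 => //; lia.
- by move=> t; rewrite EqS => ht; apply: Hy; rewrite inE ht.
- by move=> t; rewrite EqS => ht; apply: Hz; rewrite inE ht.
- by rewrite esym; apply: Hy; rewrite !inE eqxx ?orbT.
- by rewrite esym; apply: Hy; rewrite !inE eqxx ?orbT.
- by rewrite esym; apply: Hy; rewrite !inE eqxx ?orbT.
- by rewrite esym; apply: Hz; rewrite !inE eqxx ?orbT.
- by rewrite esym; apply: Hz; rewrite !inE eqxx ?orbT.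
- by rewrite esym; apply: Hz; rewrite !inE eqxx ?orbT.
Qed.


End Graph.

Theorem lemma5p3 (T : finType) (e : rel T) (k i : nat)
  (uu : nat -> T) (C1 C2 : {set {set T}}) (u v w : T) :
  simple_graph e ->
  2 <= k -> 1 <= i <= k.-1 ->
  ~ dagger1_k2 e k ->
  kcomponent e k C1 -> kcomponent e k C2 -> C1 != C2 ->
  Kcopy e k.-1 (seqset uu 1 k.-1) ->
  Kminus_of e k C1 (seqset uu 1 k.-1) ->
  Kminus_of e k C2 (seqset uu 1 k.-1) ->
  e u v ->
  [forall y in seqset uu 1 k.-1, e y u] -> ext (seqset uu 1 k.-1) u \in C1 ->
  [forall y in seqset uu 1 k.-1, e y v] -> ext (seqset uu 1 k.-1) v \in C1 ->
  [forall y in seqset uu 1 k.-1, e y w] -> ext (seqset uu 1 k.-1) w \in C2 ->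
  (* (i) *)
  independent e
    (Gamma e (seqset uu 1 i.-1 :|: seqset uu i.+1 k.-1 :|: [set w; u; v]))
  /\
  (* (ii) *)
  (forall x : nat -> T,
     Kcopy e i.-1 (seqset x 1 i.-1) ->
     (forall j, 1 <= j < i ->
        x j \in Gamma e (seqset uu j.+1 k.-1 :|: [set w; u; v])) ->
     independent e
       (Gamma e (seqset x 1 i.-1 :|: seqset uu i.+1 k.-1 :|: [set w; u; v]))).
Proof.
move=> [esym eirr] hk; have [n En] : exists n, k = n.+2 by exists (k - 2); lia.
subst k => /= /andP [hi1 hi2] ND HC1 HC2 C12 Kf _ _ euv Fu Iu Fv Iv Fw Iw.
set f := seqset uu 1 n.+1.
have toP : forall z, [forall y in f, e y z] -> forall y, y \in f -> e y z.
  by move=> z /forallP H y yf; move: (H y); rewrite yf.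
have Au := toP _ Fu. have Av := toP _ Fv. have Aw := toP _ Fw.
have P0 : Pinv e n u v w C1 C2 f.
  split => //; by move=> y yf; rewrite Au // Av // Aw.
have HM : forall x, Kcopy e i.-1 (seqset x 1 i.-1) ->
     (forall j, 1 <= j < i -> x j \in Gamma e (seqset uu j.+1 n.+1 :|: [set w; u; v])) ->
     independent e (Gamma e (seqset x 1 i.-1 :|: seqset uu i.+1 n.+1 :|: [set w; u; v])).
  move=> x Kx Hx; have hi : 0 < i <= n.+1 by rewrite hi1 hi2.
  exact: (main_ii esym eirr euv HC1 HC2 C12 ND hi Kf P0 Kx Hx).
split; last exact: HM.
have injU : forall p q, 1 <= p <= n.+1 -> 1 <= q <= n.+1 -> uu p = uu q -> p = q.
  by apply: seqset_inj; case/andP: (Kf) => _ /eqP ->; lia.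
apply: HM.
- apply: (Kcopy_sub (B := f)) (Kf).
  + by apply/subsetP => y /seqsetP [m Hm ->]; apply/seqsetP; exists m => //; lia.
  + have Ef : f = seqset uu 1 i.-1 :|: seqset uu i n.+1 by apply: seqset_split; lia.
    have c1 := seqset_card uu 1 i.-1. have c2 := seqset_card uu i n.+1.
    have cU := cardsUI (seqset uu 1 i.-1) (seqset uu i n.+1).
    have cf : #|f| = n.+1 by case/andP: (Kf) => _ /eqP.
    rewrite -Ef cf in cU; lia.
- move=> j hj; apply/GammaP => s'; rewrite !inE => /orP [/seqsetP [m Hm ->] | ].
    case/andP: (Kf) => /cliqueP C _; apply: C.
    + by apply/seqsetP; exists m => //; lia.
    + by apply/seqsetP; exists j => //; lia.
    + by apply/negP => /eqP /injU E; have := E ltac:(lia) ltac:(lia); lia.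
  have jf : uu j \in f by apply/seqsetP; exists j => //; lia.
  by case/orP => [/orP [/eqP -> | /eqP ->] | /eqP ->]; rewrite esym; [apply: Aw | apply: Au | apply: Av].
Qed.
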